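(* Let $G$ be a connected threshold graph of order $n\ge 4$ and size $m$ with $n-1<m<\binom{n}{2}$, with backwards zero position sequence $(b_1,\ldots,b_z)$ and numbers $F_p$ as in the context. Let $B\in\mathbb{R}^{z\times z}$ be given by $B_{ij}=b_{\max\{i,j\}}$, $w=(b_1,\ldots,b_z)^\intercal$, and let $\lambda_1,\ldots,\lambda_z$ be the eigenvalues of $B$ with corresponding orthonormal eigenvectors $x_1,\ldots,x_z$. Then \[F_p=\sum_{i=1}^z (w^\intercal x_i)^2\,\lambda_i^{p-1}\qquad(p\in\mathbb{N}).\]
   Context: A threshold graph is a simple graph whose vertices can be ordered $v_1,\ldots,v_n$ so that for each $2\le i\le n$, $v_i$ is either adjacent to all of $v_1,\ldots,v_{i-1}$ (then $a_i=1$) or to none of them (then $a_i=0$); by convention $a_1=1$. Vertex $v_i$ is of type 1 if $a_i=1$ and of type 0 if $a_i=0$; $c$ and $z$ are the numbers of type 1 and type 0 vertices. The backwards zero position sequence $(b_1,\ldots,b_z)$ is defined by letting $b_i$ be the number of type 1 vertices appearing after the $i$-th type 0 vertex in the order $v_1,\ldots,v_n$. For $p\ge1$, $F_p=\sum_{i_1,\ldots,i_p=1}^{z} b_{i_1}\min\{b_{i_1},b_{i_2}\}\cdots\min\{b_{i_{p-1}},b_{i_p}\}\,b_{i_p}$ (with $F_1=\sum_i b_i^2$). *)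

(* Defs.v *)
From HB Require Import structures.
From mathcomp Require Import all_boot all_order all_algebra.
Set Implicit Arguments. Unset Strict Implicit. Unset Printing Implicit Defensive.
Import Order.TTheory GRing.Theory Num.Theory.

(* A threshold graph on vertices v_1..v_n is encoded by its creation sequence
   a : 'I_n -> bool (0-indexed: vertex i is v_{i+1}); a i = true means type 1.
   The convention a_1 = 1 is imposed as a hypothesis in the theorem. *)

(* adjacency: for i < j, v_i ~ v_j iff a j (v_j joins all previous vertices). *)
Definition thr_adj n (a : 'I_n -> bool) : rel 'I_n :=
  fun i j => (i != j) && (if (i < j)%N then a j else a i).

Definition thr_connected n (a : 'I_n -> bool) : Prop :=
  forall i j : 'I_n, connect (thr_adj a) i j.

Definition thr_size n (a : 'I_n -> bool) : nat :=
  #|[set p : 'I_n * 'I_n | (p.1 < p.2)%N && thr_adj a p.1 p.2]|.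

Definition zero_positions n (a : 'I_n -> bool) : seq 'I_n :=
  [seq i <- enum 'I_n | ~~ a i].

Definition bzps n (a : 'I_n -> bool) : seq nat :=
  [seq #|[set j : 'I_n | (i < j)%N && a j]| | i : 'I_n <- zero_positions a].

(* F_p = sum_{i_1..i_p} b_{i1} min(b_{i1},b_{i2}) ... min(b_{i_{p-1}},b_{i_p}) b_{i_p},
   intended for p >= 1. *)
Definition Fp (b : seq nat) (p : nat) : nat :=
  \sum_(f : {ffun 'I_p -> 'I_(size b)})
    let c := [seq nth 0 b (f k) | k <- enum 'I_p] in
    head 0 c * (\prod_(k < p.-1) minn (nth 0 c k) (nth 0 c k.+1)) * last 0 c.

Definition Bmat (R : nzRingType) (b : seq nat) : 'M[R]_(size b) :=
  \matrix_(i, j) ((nth 0 b (maxn i j))%:R)%R.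

Definition wvec (R : nzRingType) (b : seq nat) : 'cV[R]_(size b) :=
  \col_i ((nth 0 b i)%:R)%R.

(* Main.v *)
Require Import Defs.
From HB Require Import structures.
From mathcomp Require Import all_boot all_order all_algebra.
Set Implicit Arguments. Unset Strict Implicit. Unset Printing Implicit Defensive.
Import Order.TTheory GRing.Theory Num.Theory.
Local Open Scope ring_scope.

Definition fcons (J : finType) q (j : J) (g : {ffun 'I_q -> J}) : {ffun 'I_q.+1 -> J} :=
  [ffun k => if unlift ord0 k is Some k' then g k' else j].
Definition ftail (J : finType) q (f : {ffun 'I_q.+1 -> J}) : {ffun 'I_q -> J} :=
  [ffun k => f (lift ord0 k)].

Lemma sum_ffunS (R : nmodType) (J : finType) q (F : {ffun 'I_q.+1 -> J} -> R) :
  \sum_(f : {ffun 'I_q.+1 -> J}) F f = \sum_(j : J) \sum_(g : {ffun 'I_q -> J}) F (fcons j g).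
Proof.
rewrite pair_big /=.
rewrite (reindex (fun p : J * {ffun 'I_q -> J} => fcons p.1 p.2)) //.
apply: onW_bij; exists (fun f : {ffun 'I_q.+1 -> J} => (f ord0, ftail f)).
- move=> [j g] /=; rewrite /fcons ffunE unlift_none; congr pair.
  by apply/ffunP => k; rewrite !ffunE liftK.
- move=> f /=; apply/ffunP => k; rewrite ffunE.
  by case: unliftP => [k' ->|->] //; rewrite ffunE.
Qed.

Lemma inord0E q : (inord 0 : 'I_q.+1) = ord0.
Proof. by apply: val_inj; rewrite /= inordK. Qed.

Lemma fcons_inordS (J : finType) q (j : J) (g : {ffun 'I_q.+1 -> J}) k :
  (k <= q)%N -> fcons j g (inord k.+1) = g (inord k).
Proof.
move=> Hk.
have -> : (inord k.+1 : 'I_q.+2) = lift ord0 (inord k).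
  by apply: val_inj; rewrite /= /bump /= !inordK.
by rewrite ffunE liftK.
Qed.

Lemma fcons_inord0 (J : finType) q (j : J) (g : {ffun 'I_q -> J}) :
  fcons j g (inord 0) = j.
Proof. by rewrite inord0E ffunE unlift_none. Qed.

Definition Ppath (R : nzRingType) z (M : 'M[R]_z) (w : 'I_z -> R) q
  (g : {ffun 'I_q.+1 -> 'I_z}) : R :=
  \prod_(k < q) M (g (inord k)) (g (inord k.+1)) * w (g (inord q)).

Lemma Ppath_cons (R : nzRingType) z (M : 'M[R]_z) (w : 'I_z -> R) q j
   (g : {ffun 'I_q.+1 -> 'I_z}) :
  Ppath M w (fcons j g) = M j (g ord0) * Ppath M w g.
Proof.
rewrite /Ppath big_ord_recl /= fcons_inord0 fcons_inordS // inord0E -!mulrA.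
congr (_ * _); rewrite fcons_inordS //; congr (_ * _).
apply: eq_bigr => i _; rewrite /bump /= !fcons_inordS //.
by apply: ltnW.
Qed.

Lemma path_sum (R : comNzRingType) z (M : 'M[R]_z) (w : 'cV[R]_z) (u : nat -> 'cV[R]_z) :
  u 0%N = w -> (forall q, u q.+1 = M *m u q) ->
  forall q (v : 'I_z -> R),
  \sum_(g : {ffun 'I_q.+1 -> 'I_z}) v (g ord0) * Ppath M (fun i => w i 0) g
   = \sum_i v i * u q i 0.
Proof.
move=> u0 uS; elim=> [|q IH] v.
  rewrite sum_ffunS u0; apply: eq_bigr => j _.
  rewrite (eq_bigr (fun _ => v j * w j 0)); last first.
    by move=> g _; rewrite /Ppath big_ord0 mul1r fcons_inord0 ffunE unlift_none.
  by rewrite sumr_const card_ffun !card_ord expn0.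
rewrite sum_ffunS.
under eq_bigr => j _ do under eq_bigr => g _ do
  rewrite Ppath_cons ffunE unlift_none mulrA.
rewrite exchange_big /=.
under eq_bigr => g _ do rewrite -mulr_suml.
rewrite (IH (fun i => \sum_j v j * M j i)) uS.
under [RHS]eq_bigr => i _ do rewrite mxE mulr_sumr.
rewrite exchange_big /=; apply: eq_bigr => i _; rewrite mulr_suml.
by apply: eq_bigr => k _; rewrite mulrA.
Qed.
Lemma Fp_path (b : seq nat) q :
  Fp b q.+1 = \sum_(f : {ffun 'I_q.+1 -> 'I_(size b)})
    nth 0 b (f ord0) * (\prod_(k < q) minn (nth 0 b (f (inord k))) (nth 0 b (f (inord k.+1))))
      * nth 0 b (f (inord q)).
Proof.
rewrite /Fp; apply: eq_bigr => f _ /=.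
set c := [seq _ | k <- _].
have Hc : forall k, (k < q.+1)%N -> nth 0 c k = nth 0 b (f (inord k)).
  move=> k Hk; rewrite /c (nth_map ord0) ?size_enum_ord //.
  by congr (nth 0 b (nat_of_ord (f _))); apply: val_inj; rewrite /= nth_enum_ord // inordK.
have -> : head 0 c = nth 0 c 0 by case: (c).
rewrite -nth_last size_map size_enum_ord /= !Hc // inord0E.
congr (_ * _ * _); apply: eq_bigr => k _; rewrite !Hc //.
  exact: ltn_ord.
by rewrite ltnS ltnW.
Qed.

Lemma bzps_noninc n (a : 'I_n -> bool) i j : (i <= j)%N -> (j < size (bzps a))%N ->
  (nth 0 (bzps a) j <= nth 0 (bzps a) i)%N.
Proof.
move=> Hij Hj.
have Hjz : (j < size (zero_positions a))%N by rewrite /bzps size_map in Hj.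
have x0 : 'I_n by move: Hjz; case: (zero_positions a) => // x _ _; exact x.
have Hiz : (i < size (zero_positions a))%N by apply: leq_ltn_trans Hjz.
rewrite /bzps !(nth_map x0) //.
have Hs : sorted (relpre val leq) (zero_positions a).
  rewrite /zero_positions; apply: sorted_filter.
    by move=> y x t; apply: leq_trans.
  by rewrite -sorted_map val_enum_ord iota_sorted.
have Hle : (nth x0 (zero_positions a) i <= nth x0 (zero_positions a) j)%N.
  apply: (sorted_leq_nth (leT := relpre val leq)) => //.
  by move=> y x t; apply: leq_trans.
  by move=> y; apply: leqnn.
apply: subset_leq_card; apply/subsetP => k; rewrite !inE => /andP[Hk ->]; rewrite andbT.
by apply: leq_ltn_trans Hk.
Qed.

Lemma bzps_max n (a : 'I_n -> bool) (i j : 'I_(size (bzps a))) :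
  nth 0 (bzps a) (maxn i j) = minn (nth 0 (bzps a) i) (nth 0 (bzps a) j).
Proof.
case: (leqP i j) => H.
  by apply/esym/minn_idPr; apply: bzps_noninc H (ltn_ord j).
by apply/esym/minn_idPl; apply: bzps_noninc (ltnW H) (ltn_ord i).
Qed.

Local Open Scope ring_scope.
Theorem corollaryA2 (R : realFieldType) (n : nat) (a : 'I_n -> bool)
    (X : 'M[R]_(size (bzps a))) (lam : 'I_(size (bzps a)) -> R) (p : nat) :
  (forall i : 'I_n, val i = 0%N -> a i) ->
  thr_connected a ->
  (4 <= n)%N ->
  (n.-1 < thr_size a)%N -> (thr_size a < 'C(n, 2))%N ->
  X^T *m X = 1%:M ->
  (forall i, Bmat R (bzps a) *m col i X = lam i *: col i X) ->
  (1 <= p)%N ->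
  (Fp (bzps a) p)%:R =
    \sum_(i < size (bzps a))
       ((wvec R (bzps a))^T *m col i X) 0 0 ^+ 2 * lam i ^+ p.-1.
Proof.
move=> _ _ _ _ _ HX Heig; case: p => // q _ /=.
set B := Bmat R (bzps a); set w := wvec R (bzps a).
have HXX : X *m X^T = 1%:M by apply: mulmx1C.
have HBX : B *m X = X *m diag_mx (\row_i lam i).
  apply/matrixP => r c; rewrite mul_mx_diag !mxE.
  have := congr1 (fun M : 'cV[R]_(size (bzps a)) => M r 0) (Heig c); rewrite !mxE /= => H.
  by rewrite mulrC -H; apply: eq_bigr => k _; rewrite !mxE.
pose u q := X *m diag_mx (\row_i lam i ^+ q) *m (X^T *m w).
have u0 : u 0%N = w.
  rewrite /u (_ : \row_i lam i ^+ 0 = const_mx 1); last by apply/matrixP => i j; rewrite !mxE.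
  by rewrite diag_const_mx mulmx1 mulmxA HXX mul1mx.
have uS : forall q, u q.+1 = B *m u q.
  move=> k; rewrite /u !mulmxA HBX -!mulmxA; congr (_ *m _); rewrite !mulmxA; congr (_ *m _ *m _).
  apply/matrixP => i j; rewrite mul_diag_mx !mxE.
  by case: eqP => [->|]; rewrite ?mulr0n ?mulr0 // exprS !mulr1n.
have HF : (Fp (bzps a) q.+1)%:R = \sum_(g : {ffun 'I_q.+1 -> 'I_(size (bzps a))})
     (fun i => w i 0) (g ord0) * Ppath B (fun i => w i 0) g.
  rewrite Fp_path natr_sum; apply: eq_bigr => g _.
  rewrite /Ppath !natrM natr_prod !mxE mulrA; congr (_ * _ * _).
  by apply: eq_bigr => k _; rewrite !mxE bzps_max.
rewrite HF; apply: etrans; first exact: (path_sum u0 uS q (fun i => w i 0)).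
rewrite /u.
clearbody w. under [LHS]eq_bigr => i _ do rewrite mxE mulr_sumr.
rewrite exchange_big /=; apply: eq_bigr => k _.
under eq_bigr => i _ do rewrite mul_mx_diag !mxE.
rewrite (eq_bigr (fun i => w i 0 * X i k * (lam k ^+ q * (X^T *m w) k 0))); last first.
  by move=> i _; rewrite [(X^T *m w) k 0]mxE !mulrA.
rewrite -mulr_suml.
have -> : (X^T *m w) k 0 = \sum_i w i 0 * X i k.
  by rewrite mxE; apply: eq_bigr => i _; rewrite mxE mulrC.
have -> : (w^T *m col k X) 0 0 = \sum_i w i 0 * X i k.
  by rewrite mxE; apply: eq_bigr => i _; rewrite !mxE.
by rewrite mulrCA mulrC -expr2.
Qed.
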